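(* Let $(X,d)$ be a complete metric space, let $N\in\mathbb{N}\setminus\{0\}$, let $\alpha:X\times X\rightarrow[0,+\infty)$ be $N$--transitive, and let $T:X\rightarrow X$ be an $\alpha$--contractive mapping of Meir--Keeler type such that $T$ is $\alpha$--admissible, there exists $x_{0}\in X$ with $\alpha(x_{0},Tx_{0})\geq1$, and at least one of the following holds: (i) $T$ is $\alpha$--orbitally continuous; (ii) $(X,d)$ is $(T,\alpha)$--regular. Assume moreover that $X$ is $\alpha$--connected. Then $T$ has a unique fixed point $x^{\ast}$, and $T^{n}x\rightarrow x^{\ast}$ as $n\rightarrow\infty$ for every $x\in X$.
   Context: $\mathbb{N}$ is the set of non-negative integers; $T^n$ is the $n$-th iterate of $T$. $T$ is an $\alpha$--contractive mapping of Meir--Keeler type if for every $\varepsilon>0$ there exists $\delta(\varepsilon)>0$ such that for all $x,y\in X$: $\varepsilon\leq d(x,y)<\varepsilon+\delta(\varepsilon)$ implies $\alpha(x,y)d(Tx,Ty)<\varepsilon$. $T$ is $\alpha$--admissible if $\alpha(x,y)\geq1$ implies $\alpha(Tx,Ty)\geq1$. $\alpha$ is $N$--transitive if for all $x_0,\dots,x_{N+1}\in X$ with $\alpha(x_i,x_{i+1})\geq1$ for all $i\in\{0,\dots,N\}$ one has $\alpha(x_0,x_{N+1})\geq1$. A sequence $\{x_n\}$ is $(T,\alpha)$--orbital if $x_n=T^nx_0$ and $\alpha(x_n,x_{n+1})\geq1$ for all $n$. $T$ is $\alpha$--orbitally continuous if for every $(T,\alpha)$--orbital sequence $\{x_n\}$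 with $x_n\rightarrow x$ there is a subsequence with $Tx_{n(k)}\rightarrow Tx$. $(X,d)$ is $(T,\alpha)$--regular if for every $(T,\alpha)$--orbital sequence $\{x_n\}$ with $x_n\rightarrow x$ there is a subsequence with $\alpha(x_{n(k)},x)\geq1$ for all $k$. An $\alpha$--chain from $x$ to $y$ is a tuple $(z_0,\dots,z_n)$ with $z_0=x$, $z_n=y$ and, for each $i\in\{1,\dots,n\}$, $\alpha(z_{i-1},z_i)\geq1$ or $\alpha(z_i,z_{i-1})\geq1$. $X$ is $\alpha$--connected if for all $x\neq y$ in $X$ there exists an $\alpha$--chain from $x$ to $y$. *)

(* Defs.v *)
From Stdlib Require Import Reals Lra Lia.
Open Scope R_scope.

Section Defs.
Context {X : Type}.

Definition is_metric (d : X -> X -> R) : Prop :=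
  (forall x y, d x y = 0 <-> x = y) /\
  (forall x y, d x y = d y x) /\
  (forall x y z, d x z <= d x y + d y z).

Definition cauchy_seq (d : X -> X -> R) (u : nat -> X) : Prop :=
  forall eps, 0 < eps -> exists N : nat, forall m n : nat,
    (N <= m)%nat -> (N <= n)%nat -> d (u m) (u n) < eps.

Definition seq_converges (d : X -> X -> R) (u : nat -> X) (x : X) : Prop :=
  forall eps, 0 < eps -> exists N : nat, forall n : nat,
    (N <= n)%nat -> d (u n) x < eps.

Definition complete_metric (d : X -> X -> R) : Prop :=
  is_metric d /\ forall u, cauchy_seq d u -> exists x, seq_converges d u x.

Definition strictly_increasing (phi : nat -> nat) : Prop :=
  forall k, (phi k < phi (S k))%nat.

Definition iterT (T : X -> X) (n : nat) (x : X) : X := Nat.iter n T x.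

Definition alpha_MK_contractive (d : X -> X -> R) (alpha : X -> X -> R)
  (T : X -> X) : Prop :=
  forall eps, 0 < eps -> exists delta, 0 < delta /\
    forall x y, eps <= d x y -> d x y < eps + delta ->
      alpha x y * d (T x) (T y) < eps.

Definition alpha_admissible (alpha : X -> X -> R) (T : X -> X) : Prop :=
  forall x y, 1 <= alpha x y -> 1 <= alpha (T x) (T y).

Definition N_transitive (N : nat) (alpha : X -> X -> R) : Prop :=
  forall x : nat -> X,
    (forall i, (i <= N)%nat -> 1 <= alpha (x i) (x (S i))) ->
    1 <= alpha (x O) (x (S N)).

Definition orbital (alpha : X -> X -> R) (T : X -> X) (x0 : X) : Prop :=
  forall n, 1 <= alpha (iterT T n x0) (iterT T (S n) x0).

Definition alpha_orbitally_continuous (d : X -> X -> R) (alpha : X -> X -> R)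
  (T : X -> X) : Prop :=
  forall x0 x, orbital alpha T x0 ->
    seq_converges d (fun n => iterT T n x0) x ->
    exists phi, strictly_increasing phi /\
      seq_converges d (fun k => T (iterT T (phi k) x0)) (T x).

Definition T_alpha_regular (d : X -> X -> R) (alpha : X -> X -> R)
  (T : X -> X) : Prop :=
  forall x0 x, orbital alpha T x0 ->
    seq_converges d (fun n => iterT T n x0) x ->
    exists phi, strictly_increasing phi /\
      forall k, 1 <= alpha (iterT T (phi k) x0) x.

Definition alpha_chain (alpha : X -> X -> R) (x y : X) : Prop :=
  exists (n : nat) (z : nat -> X), z O = x /\ z n = y /\
    forall i, (1 <= i <= n)%nat ->
      1 <= alpha (z (i - 1)%nat) (z i) \/ 1 <= alpha (z i) (z (i - 1)%nat).

Definition alpha_connected (alpha : X -> X -> R) : Prop :=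
  forall x y, x <> y -> alpha_chain alpha x y.

End Defs.

(* Main.v *)
Require Import Defs.
From Stdlib Require Import Reals Lra Lia Classical.
Open Scope R_scope.

Lemma d_nonneg (X : Type) (d : X -> X -> R) : is_metric d -> forall x y, 0 <= d x y.
Proof.
  intros [H1 [H2 H3]] x y. pose proof (H3 x y x). rewrite (H2 y x) in H.
  assert (d x x = 0) by (apply H1; reflexivity). lra.
Qed.

Lemma d_refl (X : Type) (d : X -> X -> R) : is_metric d -> forall x, d x x = 0.
Proof. intros [H1 _] x. apply H1; reflexivity. Qed.

Lemma iter_S (X : Type) (T : X -> X) n x : iterT T (S n) x = T (iterT T n x).
Proof. reflexivity. Qed.

Lemma iter_add (X : Type) (T : X -> X) p q x : iterT T (p + q) x = iterT T p (iterT T q x).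
Proof. apply Nat.iter_add. Qed.

Lemma iter_swap (X : Type) (T : X -> X) n x : iterT T n (T x) = T (iterT T n x).
Proof. apply Nat.iter_swap. Qed.

Lemma contr_le (X : Type) (d : X -> X -> R) (alpha : X -> X -> R) (T : X -> X) :
  is_metric d -> alpha_MK_contractive d alpha T ->
  forall a b, 1 <= alpha a b -> d (T a) (T b) <= d a b.
Proof.
  intros Hm HMK a b Ha.
  destruct (Req_dec (d a b) 0) as [E|E].
  - apply (proj1 Hm) in E. subst. rewrite !(d_refl _ d Hm). lra.
  - pose proof (d_nonneg _ d Hm a b). destruct (HMK (d a b)) as [de [Hde H0]]; [lra|].
    specialize (H0 a b (Rle_refl _) ltac:(lra)).
    pose proof (d_nonneg _ d Hm (T a) (T b)). nra.
Qed.

Lemma contr_step (X : Type) (d : X -> X -> R) (alpha : X -> X -> R) (T : X -> X) :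
  is_metric d -> alpha_MK_contractive d alpha T ->
  forall eps delta, 0 < eps ->
  (forall x y, eps <= d x y -> d x y < eps + delta -> alpha x y * d (T x) (T y) < eps) ->
  forall a b, 1 <= alpha a b -> d a b < eps + delta -> d (T a) (T b) < eps.
Proof.
  intros Hm HMK eps delta He H a b Ha Hd.
  destruct (Rle_lt_dec eps (d a b)) as [E|E].
  - specialize (H a b E Hd). pose proof (d_nonneg _ d Hm (T a) (T b)). nra.
  - pose proof (contr_le _ d alpha T Hm HMK a b Ha). lra.
Qed.

Lemma adm_iter (X : Type) (alpha : X -> X -> R) (T : X -> X) :
  alpha_admissible alpha T -> forall a b, 1 <= alpha a b ->
  forall n, 1 <= alpha (iterT T n a) (iterT T n b).
Proof. intros Had a b Ha n; induction n; simpl; auto. Qed.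

Lemma contr_iter (X : Type) (d : X -> X -> R) (alpha : X -> X -> R) (T : X -> X) :
  is_metric d -> alpha_MK_contractive d alpha T -> alpha_admissible alpha T ->
  forall a b, 1 <= alpha a b -> forall n m, (n <= m)%nat ->
  d (iterT T m a) (iterT T m b) <= d (iterT T n a) (iterT T n b).
Proof.
  intros Hm HMK Had a b Ha n m Hnm. induction Hnm. lra.
  rewrite !iter_S. eapply Rle_trans; [|exact IHHnm].
  apply (contr_le _ d alpha T Hm HMK). apply adm_iter; auto.
Qed.

Lemma pair_to0 (X : Type) (d : X -> X -> R) (alpha : X -> X -> R) (T : X -> X) :
  is_metric d -> alpha_MK_contractive d alpha T -> alpha_admissible alpha T ->
  forall a b, 1 <= alpha a b -> forall g, 0 < g -> exists n, forall m, (n <= m)%nat ->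
  d (iterT T m a) (iterT T m b) < g.
Proof.
  intros Hm HMK Had a b Ha g Hg.
  set (e := fun n => d (iterT T n a) (iterT T n b)).
  assert (Hex : exists n, e n < g).
  { apply NNPP; intro Hn.
    assert (Hall : forall n, g <= e n).
    { intro n. destruct (Rlt_le_dec (e n) g); auto. exfalso; eauto. }
    set (E := fun y => exists n, y = - e n).
    destruct (completeness E) as [m [Hub Hl]].
    { exists 0. intros y [n ->]. pose proof (d_nonneg _ d Hm (iterT T n a) (iterT T n b)).
      unfold e. lra. }
    { exists (- e 0%nat). exists 0%nat. reflexivity. }
    assert (Hm1 : m <= - g).
    { apply Hl. intros y [n ->]. specialize (Hall n). lra. }
    destruct (HMK (- m)) as [de [Hde H]]; [lra|].
    assert (Hn2 : exists n, e n < - m + de).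
    { apply NNPP; intro Hn2.
      assert (m <= - (- m + de)).
      { apply Hl. intros y [n ->]. destruct (Rlt_le_dec (e n) (- m + de)).
        exfalso; eauto. lra. }
      lra. }
    destruct Hn2 as [n Hn2].
    assert (Hge : - e n <= m) by (apply Hub; exists n; reflexivity).
    pose proof (contr_step _ d alpha T Hm HMK (- m) de ltac:(lra) H
      (iterT T n a) (iterT T n b) (adm_iter _ alpha T Had a b Ha n) ltac:(unfold e in *; lra)).
    assert (Hge2 : - e (S n) <= m) by (apply Hub; exists (S n); reflexivity).
    unfold e in Hge2. rewrite !iter_S in Hge2. lra. }
  destruct Hex as [n Hn]. exists n. intros m Hnm.
  pose proof (contr_iter _ d alpha T Hm HMK Had a b Ha n m Hnm). unfold e in Hn. lra.
Qed.

Lemma ntrans_chain (X : Type) (alpha : X -> X -> R) (N : nat) (u : nat -> X) :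
  N_transitive N alpha -> (forall n, 1 <= alpha (u n) (u (S n))) ->
  forall j n, 1 <= alpha (u n) (u (n + 1 + j * N)%nat).
Proof.
  intros HN Hu j. induction j; intro n.
  - replace (n + 1 + 0 * N)%nat with (S n) by lia. auto.
  - set (y := fun i => match i with O => u n | S i' => u (n + 1 + j * N + i')%nat end).
    specialize (HN y). simpl in HN.
    replace (n + 1 + S j * N)%nat with (n + 1 + j * N + N)%nat by lia.
    apply HN. intros i Hi. destruct i; simpl.
    + replace (n + 1 + j * N + 0)%nat with (n + 1 + j * N)%nat by lia. auto.
    + replace (n + 1 + j * N + S i)%nat with (S (n + 1 + j * N + i)) by lia. auto.
Qed.

Lemma sum_bound (X : Type) (d : X -> X -> R) (u : nat -> X) c K :
  is_metric d -> (forall m, (K <= m)%nat -> d (u m) (u (S m)) <= c) ->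
  forall n k, (K <= n)%nat -> d (u n) (u (n + k)%nat) <= INR k * c.
Proof.
  intros Hm Hc n k Hn. induction k.
  - replace (n + 0)%nat with n by lia. rewrite (d_refl _ d Hm). simpl; lra.
  - rewrite S_INR. replace (n + S k)%nat with (S (n + k)) by lia.
    pose proof (proj2 (proj2 Hm) (u n) (u (n + k)%nat) (u (S (n + k)))).
    pose proof (Hc (n + k)%nat ltac:(lia)). lra.
Qed.

Lemma seq_unique (X : Type) (d : X -> X -> R) (u : nat -> X) a b :
  is_metric d -> seq_converges d u a -> seq_converges d u b -> a = b.
Proof.
  intros Hm Ha Hb. apply (proj1 Hm). pose proof (d_nonneg _ d Hm a b).
  destruct (Req_dec (d a b) 0) as [E|E]; auto. exfalso.
  destruct (Ha (d a b / 2)) as [n1 H1]; [lra|].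
  destruct (Hb (d a b / 2)) as [n2 H2]; [lra|].
  specialize (H1 (n1 + n2)%nat ltac:(lia)). specialize (H2 (n1 + n2)%nat ltac:(lia)).
  pose proof (proj2 (proj2 Hm) a (u (n1 + n2)%nat) b) as H3.
  rewrite (proj1 (proj2 Hm) a (u (n1 + n2)%nat)) in H3. lra.
Qed.

Lemma incr_ge (phi : nat -> nat) : strictly_increasing phi -> forall k, (k <= phi k)%nat.
Proof. intros H k; induction k. lia. specialize (H k). lia. Qed.

Lemma sub_conv (X : Type) (d : X -> X -> R) (u : nat -> X) x (phi : nat -> nat) :
  strictly_increasing phi -> seq_converges d u x -> seq_converges d (fun k => u (phi k)) x.
Proof.
  intros Hp Hu e He. destruct (Hu e He) as [n Hn]. exists n. intros k Hk.
  apply Hn. pose proof (incr_ge phi Hp k). lia.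
Qed.

Lemma orbit_alpha (X : Type) (alpha : X -> X -> R) (T : X -> X) x0 :
  alpha_admissible alpha T -> 1 <= alpha x0 (T x0) ->
  forall n, 1 <= alpha (iterT T n x0) (iterT T (S n) x0).
Proof.
  intros Had H n. pose proof (adm_iter _ alpha T Had _ _ H n).
  rewrite iter_swap in H0. exact H0.
Qed.

Lemma orbit_cauchy (X : Type) (d : X -> X -> R) (N : nat)
  (alpha : X -> X -> R) (T : X -> X) x0 :
  is_metric d -> (0 < N)%nat -> N_transitive N alpha ->
  alpha_MK_contractive d alpha T -> alpha_admissible alpha T ->
  1 <= alpha x0 (T x0) -> cauchy_seq d (fun n => iterT T n x0).
Proof.
  intros Hm HN0 HN HMK Had H0 eps Heps.
  set (u := fun n => iterT T n x0).
  assert (Hu : forall n, 1 <= alpha (u n) (u (S n))) by (intro; apply orbit_alpha; auto).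
  assert (HuA : forall k m, iterT T k (u m) = u (k + m)%nat).
  { intros; unfold u; rewrite iter_add; reflexivity. }
  set (e := eps / 3).
  destruct (HMK e) as [delta [Hdel H]]; [unfold e; lra|].
  set (dl := Rmin delta e).
  assert (Hdl : 0 < dl) by (unfold dl, e; apply Rmin_case; lra).
  assert (Hdl1 : dl <= delta) by apply Rmin_l.
  assert (Hdl2 : dl <= e) by apply Rmin_r.
  assert (HNpos : 1 <= INR N) by (apply (le_INR 1); lia).
  set (c := dl / (2 * INR N)).
  assert (Hc : 0 < c) by (unfold c; apply Rdiv_lt_0_compat; lra).
  assert (HNc : INR N * c = dl / 2) by (unfold c; field; lra).
  assert (Hc2 : c <= dl / 2).
  { assert (c <= INR N * c) by nra. lra. }
  destruct (pair_to0 _ d alpha T Hm HMK Had x0 (T x0) H0 c Hc) as [K HK].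
  assert (Hdm : forall m, (K <= m)%nat -> d (u m) (u (S m)) <= c).
  { intros m Hmk. specialize (HK m Hmk). unfold u. rewrite iter_swap in HK.
    rewrite iter_S. lra. }
  assert (ClaimA : forall n j, (K <= n)%nat -> d (u n) (u (n + 1 + j * N)%nat) < e + dl).
  { intros n j Hn. induction j.
    - replace (n + 1 + 0 * N)%nat with (S n) by lia. specialize (Hdm n Hn).
      unfold e in *; lra.
    - replace (n + 1 + S j * N)%nat with ((N + n) + 1 + j * N)%nat by lia.
      pose proof (proj2 (proj2 Hm) (u n) (u (N + n)%nat) (u (N + n + 1 + j * N)%nat)) as Ht.
      pose proof (sum_bound _ d u c K Hm Hdm n N Hn) as Hs.
      replace (n + N)%nat with (N + n)%nat in Hs by lia.
      assert (Ha : 1 <= alpha (u n) (u (n + 1 + j * N)%nat))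
        by (apply (ntrans_chain _ alpha N u HN Hu)).
      pose proof (contr_step _ d alpha T Hm HMK e delta ltac:(unfold e; lra) H _ _ Ha
        ltac:(lra)) as H1.
      pose proof (contr_iter _ d alpha T Hm HMK Had _ _ Ha 1 N ltac:(lia)) as H2.
      simpl in H2. rewrite !HuA in H2.
      replace (N + (n + 1 + j * N))%nat with (N + n + 1 + j * N)%nat in H2 by lia.
      lra. }
  assert (Main : forall n m, (K <= n)%nat -> (n <= m)%nat -> d (u n) (u m) < eps).
  { intros n m Hn Hnm. destruct (Nat.eq_dec n m) as [->|Hne].
    - rewrite (d_refl _ d Hm). lra.
    - set (j := ((m - n - 1) / N)%nat). set (r := ((m - n - 1) mod N)%nat).
      pose proof (Nat.div_mod (m - n - 1) N ltac:(lia)) as Hdm2.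
      pose proof (Nat.mod_upper_bound (m - n - 1) N ltac:(lia)) as Hr.
      fold j r in Hdm2, Hr.
      assert (Em : m = (n + 1 + j * N + r)%nat) by lia.
      rewrite Em.
      pose proof (ClaimA n j Hn) as HA.
      pose proof (sum_bound _ d u c K Hm Hdm (n + 1 + j * N)%nat r ltac:(lia)) as Hs.
      pose proof (proj2 (proj2 Hm) (u n) (u (n + 1 + j * N)%nat) (u (n + 1 + j * N + r)%nat)) as Ht.
      assert (INR r <= INR N) by (apply le_INR; lia).
      assert (INR r * c <= INR N * c) by nra.
      unfold e in *; lra. }
  exists K. intros m n Hm1 Hn1. fold (u m) (u n).
  destruct (Nat.le_ge_cases m n).
  - apply Main; auto.
  - rewrite (proj1 (proj2 Hm)). apply Main; auto.
Qed.

Lemma chain_to0 (X : Type) (d : X -> X -> R) (alpha : X -> X -> R) (T : X -> X) :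
  is_metric d -> alpha_MK_contractive d alpha T -> alpha_admissible alpha T ->
  forall a b, alpha_chain alpha a b -> forall g, 0 < g -> exists n, forall m, (n <= m)%nat ->
  d (iterT T m a) (iterT T m b) < g.
Proof.
  intros Hm HMK Had a b [n [z [Hz0 [Hzn Hz]]]]. subst a b.
  assert (forall i, (i <= n)%nat -> forall g, 0 < g -> exists K, forall m, (K <= m)%nat ->
    d (iterT T m (z 0%nat)) (iterT T m (z i)) < g).
  { induction i; intros Hi g Hg.
    - exists 0%nat. intros. rewrite (d_refl _ d Hm). lra.
    - destruct (IHi ltac:(lia) (g/2) ltac:(lra)) as [K1 H1].
      assert (Hp : exists K, forall m, (K <= m)%nat ->
        d (iterT T m (z i)) (iterT T m (z (S i))) < g / 2).
      { specialize (Hz (S i) ltac:(lia)). replace (S i - 1)%nat with i in Hz by lia.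
        destruct Hz as [Hz|Hz].
        - apply (pair_to0 _ d alpha T Hm HMK Had); auto; lra.
        - destruct (pair_to0 _ d alpha T Hm HMK Had _ _ Hz (g/2) ltac:(lra)) as [K H].
          exists K. intros. rewrite (proj1 (proj2 Hm)). auto. }
      destruct Hp as [K2 H2]. exists (K1 + K2)%nat. intros m Hmk.
      specialize (H1 m ltac:(lia)). specialize (H2 m ltac:(lia)).
      pose proof (proj2 (proj2 Hm) (iterT T m (z 0%nat)) (iterT T m (z i)) (iterT T m (z (S i)))).
      lra. }
  intros g Hg. apply (H n (le_n n) g Hg).
Qed.

Lemma iter_fix (X : Type) (T : X -> X) x : T x = x -> forall n, iterT T n x = x.
Proof. intros H n; induction n; auto. rewrite iter_S, IHn. auto. Qed.

Theorem theorem4 (X : Type) (d : X -> X -> R) (N : nat)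
  (alpha : X -> X -> R) (T : X -> X) :
  complete_metric d ->
  (0 < N)%nat ->
  (forall x y, 0 <= alpha x y) ->
  N_transitive N alpha ->
  alpha_MK_contractive d alpha T ->
  alpha_admissible alpha T ->
  (exists x0, 1 <= alpha x0 (T x0)) ->
  (alpha_orbitally_continuous d alpha T \/ T_alpha_regular d alpha T) ->
  alpha_connected alpha ->
  exists xs : X, T xs = xs /\ (forall y, T y = y -> y = xs) /\
    forall x, seq_converges d (fun n => iterT T n x) xs.
Proof.
  intros [Hm Hcomp] HN0 Hpos HN HMK Had [x0 Hx0] Hcase Hcon.
  destruct (Hcomp _ (orbit_cauchy _ d N alpha T x0 Hm HN0 HN HMK Had Hx0)) as [xs Hxs].
  assert (Horb : orbital alpha T x0) by (intro; apply orbit_alpha; auto).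
  assert (Hsucc : forall phi, strictly_increasing phi ->
    seq_converges d (fun k => iterT T (S (phi k)) x0) xs).
  { intros phi Hp. apply (sub_conv _ d (fun n => iterT T n x0) xs (fun k => S (phi k))); auto.
    intro k. specialize (Hp k). lia. }
  assert (Hfix : T xs = xs).
  { destruct Hcase as [Hc|Hr].
    - destruct (Hc x0 xs Horb Hxs) as [phi [Hp Hl]].
      symmetry. eapply seq_unique; [exact Hm| exact (Hsucc phi Hp) | exact Hl].
    - destruct (Hr x0 xs Horb Hxs) as [phi [Hp Hl]].
      symmetry. eapply seq_unique; [exact Hm| exact (Hsucc phi Hp) |].
      intros e He. destruct (sub_conv _ d _ xs phi Hp Hxs e He) as [K HK].
      exists K. intros n Hn. rewrite iter_S.
      pose proof (contr_le _ d alpha T Hm HMK _ _ (Hl n)). specialize (HK n Hn).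
      simpl in HK. lra. }
  assert (Hconv : forall x, seq_converges d (fun n => iterT T n x) xs).
  { intros x e He. destruct (classic (x = xs)) as [->|Hne].
    - exists 0%nat. intros. rewrite iter_fix; auto. rewrite (d_refl _ d Hm). lra.
    - destruct (chain_to0 _ d alpha T Hm HMK Had x xs (Hcon x xs Hne) e He) as [K HK].
      exists K. intros n Hn. specialize (HK n Hn). rewrite (iter_fix _ T xs Hfix) in HK. auto. }
  exists xs. split; [exact Hfix|]. split; [|exact Hconv].
  intros y Hy. eapply seq_unique; [exact Hm| |exact (Hconv y)].
  intros e He. exists 0%nat. intros. rewrite iter_fix; auto. rewrite (d_refl _ d Hm). lra.
Qed.
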